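(* Let $\mathbf C$ be an admissible category of lattices, $X$ a convergence space, and $L$ a convergence $\mathbf C$-object. For every morphism $\varphi:L\to\mathbb P(X)$ in $\mathbf C^{\mathrm{conv}}$ there is a unique map $\varphi^\dagger:X\to\mathrm{pt}\,L$ such that $(\varphi^\dagger)^{-1}(\ell^\bullet)=\varphi(\ell)$ for every $\ell\in L$, and this map is continuous.
   Context: A filter on an inf-semilattice $L$ is a non-empty upward-closed subset closed under binary meets ($L$ itself allowed); $\mathbb F L$ is the set of filters. A category of lattices has lattices as objects and morphisms preserving finite suprema and infima; it is admissible if every powerset $\mathbb P(X)$ is an object and there are classes of index sets $\mathcal I,\mathcal J$ such that morphisms $L\to L'$ are exactly the monotone maps preserving all existing $I$-indexed infima ($I\in\mathcal I$) and $J$-indexed suprema ($J\in\mathcal J$). A convergence $\mathbf C$-object is $(L,\lim_L)$ with $L$ a $\mathbf C$-object and $\lim_L:\mathbb F L\to L$ monotone; morphisms $\varphi:L\to L'$ of $\mathbf C^{\mathrm{conv}}$ are $\mathbf C$-morphisms with $\lim_{L'}\mathcal F\le\varphi(\lim_L\varphi^{-1}(\mathcal F))$ for all $\mathcal F\in\mathbb F L'$. A convergence space is a set $X$ with a relation $\to$ between filters of subsets of $X$ and points with $\{S:x\in S\}\to x$ and $\mathcal F\to x,\mathcal F\subseteq\mathcal G\Rightarrow\mathcal G\to x$; $f:X\to Y$ is continuous if $\mathcal F\to x$ implies $f[\mathcal F]\to f(x)$, $f[\mathcal F]=\{B:f^{-1}(B)\in\mathcal F\}$. $\mathbb P(X)$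 is the powerset with $\lim\mathcal F=\{x:\mathcal F\to x\}$. With $\mathbb P(1)=\{\emptyset,\{*\}\}$ and $\lim_{\mathbb P(1)}$ constantly $\{*\}$, $\mathrm{pt}\,L$ is the set of $\mathbf C^{\mathrm{conv}}$-morphisms $L\to\mathbb P(1)$, $\ell^\bullet=\{\psi\in\mathrm{pt}\,L:\psi(\ell)=\{*\}\}$, and $\mathrm{pt}\,L$ is a convergence space with $\mathcal F\to\psi$ iff $\psi\in(\lim_L\{\ell:\ell^\bullet\in\mathcal F\})^\bullet$. *)

(* Defs.v *)
From mathcomp Require Import all_boot.
From mathcomp Require Import boolp classical_sets.
Set Implicit Arguments.
Unset Strict Implicit.
Unset Printing Implicit Defensive.
Local Open Scope classical_set_scope.

Definition is_inf (T : Type) (le : T -> T -> Prop) (I : Type) (f : I -> T) (m : T) :=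
  (forall i, le m (f i)) /\ (forall z, (forall i, le z (f i)) -> le z m).
Definition is_sup (T : Type) (le : T -> T -> Prop) (I : Type) (f : I -> T) (m : T) :=
  (forall i, le (f i) m) /\ (forall z, (forall i, le (f i) z) -> le m z).

Record Lattice := Lat {
  car :> Type;
  le : car -> car -> Prop;
  le_refl : forall x, le x x;
  le_trans : forall x y z, le x y -> le y z -> le x z;
  le_anti : forall x y, le x y -> le y x -> x = y;
  fin_inf : forall n (f : 'I_n -> car), exists m, is_inf le f m;
  fin_sup : forall n (f : 'I_n -> car), exists m, is_sup le f m }.

Lemma pow_anti (X : Type) (A B : set X) : A `<=` B -> B `<=` A -> A = B.
Proof. by move=> h1 h2; apply/seteqP; split. Qed.

Lemma pow_inf (X : Type) n (f : 'I_n -> set X) :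
  exists m, is_inf (@subset X) f m.
Proof.
exists [set x | forall i, f i x]; split; first by move=> i x /(_ i).
by move=> z hz x zx i; apply: hz.
Qed.

Lemma pow_sup (X : Type) n (f : 'I_n -> set X) :
  exists m, is_sup (@subset X) f m.
Proof.
exists [set x | exists i, f i x]; split; first by move=> i x fx; exists i.
by move=> z hz x [i fx]; exact: hz fx.
Qed.

Definition powlat (X : Type) : Lattice :=
  @Lat (set X) (@subset X) (@subset_refl X) (fun A B C h1 h2 => subset_trans h1 h2)
    (@pow_anti X) (@pow_inf X) (@pow_sup X).

(** * Filters on an inf-semilattice (the whole lattice is allowed) *)
Definition isFilter (L : Lattice) (F : set L) : Prop :=
  (exists a, F a) /\
  (forall a b, F a -> le a b -> F b) /\
  (forall a b m, F a -> F b ->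
     is_inf (@le L) (fun i : bool => if i then a else b) m -> F m).

Definition monotone (A B : Lattice) (phi : A -> B) :=
  forall x y, le x y -> le (phi x) (phi y).
Definition pres_inf (A B : Lattice) (I : Type) (phi : A -> B) :=
  forall (f : I -> A) m, is_inf (@le A) f m -> is_inf (@le B) (phi \o f) (phi m).
Definition pres_sup (A B : Lattice) (I : Type) (phi : A -> B) :=
  forall (f : I -> A) m, is_sup (@le A) f m -> is_sup (@le B) (phi \o f) (phi m).

Definition Hom (IC JC : Type -> Prop) (A B : Lattice) (phi : A -> B) :=
  monotone phi /\
  (forall I, IC I -> pres_inf I phi) /\
  (forall J, JC J -> pres_sup J phi).

Definition admissible (Obj : Lattice -> Prop) (IC JC : Type -> Prop) :=
  (forall (A B : Lattice) (phi : A -> B), Obj A -> Obj B -> Hom IC JC phi ->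
     forall n, pres_inf 'I_n phi /\ pres_sup 'I_n phi) /\
  (forall X : Type, Obj (powlat X)).

(** * Convergence C-objects: lim is given as a function on subsets of L; only
    its values on filters matter (monotone on the poset of filters). *)
Record convObj := ConvObj {
  clat :> Lattice;
  lim : set clat -> clat;
  lim_mono : forall F G : set clat, isFilter F -> isFilter G -> F `<=` G ->
    le (lim F) (lim G) }.

Definition convHom (IC JC : Type -> Prop) (L L' : convObj) (phi : L -> L') :=
  Hom IC JC phi /\
  forall F : set L', isFilter F -> le (lim F) (phi (lim (phi @^-1` F))).

Definition setFilter (X : Type) (F : set (set X)) : Prop :=
  (exists A, F A) /\
  (forall A B, F A -> A `<=` B -> F B) /\
  (forall A B, F A -> F B -> F (A `&` B)).

Definition principal (X : Type) (x : X) : set (set X) := [set S | S x].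

Record convSpace := ConvSpace {
  pts :> Type;
  conv : set (set pts) -> pts -> Prop;
  conv_point : forall x, conv (principal x) x;
  conv_up : forall (F G : set (set pts)) x, setFilter F -> setFilter G ->
    F `<=` G -> conv F x -> conv G x }.

Definition imfilter (X Y : Type) (f : X -> Y) (F : set (set X)) : set (set Y) :=
  [set B | F (f @^-1` B)].

Definition continuous_map (X Y : Type) (cX : set (set X) -> X -> Prop)
  (cY : set (set Y) -> Y -> Prop) (f : X -> Y) :=
  forall F x, setFilter F -> cX F x -> cY (imfilter f F) (f x).

Lemma filter_setFilter (X : Type) (F : set (set X)) :
  @isFilter (powlat X) F -> setFilter F.
Proof.
move=> [ne [up cl]]; split=> //; split=> // A B FA FB.
apply: (cl A B) => //; split; first by case=> x [].
by move=> z hz x zx; split; [exact: (hz true) | exact: (hz false)].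
Qed.

Lemma powconv_mono (X : convSpace) (F G : set (set X)) :
  @isFilter (powlat X) F -> @isFilter (powlat X) G -> F `<=` G ->
  @le (powlat X) [set x | conv F x] [set x | conv G x].
Proof.
move=> hF hG FG x /= Fx.
exact: (conv_up (filter_setFilter hF) (filter_setFilter hG) FG Fx).
Qed.

Definition powconv (X : convSpace) : convObj :=
  @ConvObj (powlat X) (fun F => [set x | conv F x]) (@powconv_mono X).

Lemma p1_mono (F G : set (powlat unit)) :
  isFilter F -> isFilter G -> F `<=` G -> @le (powlat unit) [set tt] [set tt].
Proof. by move=> *; exact: subset_refl. Qed.

Definition P1 : convObj := @ConvObj (powlat unit) (fun _ => [set tt]) p1_mono.

Definition pt (IC JC : Type -> Prop) (L : convObj) :=
  {psi : L -> set unit | convHom IC JC (L := L) (L' := P1) psi}.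

Definition bullet (IC JC : Type -> Prop) (L : convObj) (l : L) : set (pt IC JC L) :=
  [set psi | proj1_sig psi l = [set tt]].

Definition conv_pt (IC JC : Type -> Prop) (L : convObj)
  (F : set (set (pt IC JC L))) (psi : pt IC JC L) : Prop :=
  @bullet IC JC L (lim [set l | F (@bullet IC JC L l)]) psi.

(* Main.v *)
Require Import Defs.
From mathcomp Require Import all_boot.
From mathcomp Require Import boolp classical_sets.
Local Open Scope classical_set_scope.

Lemma ev_inf (X I : Type) (g : I -> set X) (M : set X) (x : X) :
  is_inf (@subset X) g M ->
  is_inf (@subset unit) (fun i => [set _ : unit | g i x]) [set _ : unit | M x].
Proof.
move=> [lb gr]; split.
  by move=> i u /= Mx; apply: (lb i).
move=> z hz u zu /=.
have : [set x] `<=` M.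
  apply: gr => i y -> ; exact: (hz i u zu).
by apply; rewrite /set1 /=.
Qed.

Lemma ev_sup (X I : Type) (g : I -> set X) (M : set X) (x : X) :
  is_sup (@subset X) g M ->
  is_sup (@subset unit) (fun i => [set _ : unit | g i x]) [set _ : unit | M x].
Proof.
move=> [ub le]; split.
  by move=> i u /= gx; apply: (ub i).
move=> z hz u /= Mx; case: u; apply: contrapT => nz.
have : M `<=` [set y | M y /\ y <> x].
  apply: le => i y giy; split; first exact: (ub i).
  move=> exy; apply: nz; subst y; exact: (hz i tt giy).
by move=> /(_ x Mx) [].
Qed.

Lemma sig_eq2 (A : Type) (P : A -> Prop) (a b : {x | P x}) :
  proj1_sig a = proj1_sig b -> a = b.
Proof.
case: a => a pa; case: b => b pb /= e; subst.
by congr exist; apply: Prop_irrelevance.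
Qed.

Lemma setunit_eq (A : set unit) (P : Prop) :
  (A = [set tt] <-> P) -> A = [set _ : unit | P].
Proof.
move=> h; apply/seteqP; split.
  move=> [] Att /=; apply/h; apply/seteqP; split => [[] _ //|[] _ //].
move=> [] /= p; have := proj2 h p => ->; done.
Qed.

Theorem mainTheorem4 (Obj : Lattice -> Prop) (IC JC : Type -> Prop)
  (hC : admissible Obj IC JC) (X : convSpace) (L : convObj) (hL : Obj L)
  (phi : L -> set X) (hphi : convHom IC JC (L := L) (L' := powconv X) phi) :
  exists phid : X -> pt IC JC L,
    ((forall l : L, phid @^-1` @bullet IC JC L l = phi l) /\
     continuous_map (@conv X) (@conv_pt IC JC L) phid) /\
    (forall g : X -> pt IC JC L,
       (forall l : L, g @^-1` @bullet IC JC L l = phi l) -> g = phid).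
Proof.
case: hphi => [[hmon [hinf hsup]] hlim].
pose psi (x : X) (l : L) : set unit := [set _ : unit | phi l x].
have hpsi : forall x, convHom IC JC (L := L) (L' := P1) (psi x).
  move=> x; split; first split.
  - by move=> a b ab u /=; apply: (hmon a b ab).
  split.
  - move=> I hI f m hm; have := @ev_inf _ _ _ _ x (hinf I hI f m hm); exact.
  - move=> J hJ f m hm; have := @ev_sup _ _ _ _ x (hsup J hJ f m hm); exact.
  move=> F hF /= u _.
  pose G : set (set X) := [set A | F [set _ : unit | A x]].
  have FT : F [set tt].
    case: hF => [[a Fa] [up _]]; apply: (up a) => // [] [] _; done.
  have hG : @isFilter (powlat X) G.
    case: hF => [ne [up cl]]; split; first by exists setT; rewrite /G /=;
      have -> : [set _ : unit | @setT X x] = [set tt] by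
        apply/seteqP; split => [] [].
    split.
      move=> a b Ga ab; apply: (up _ _ Ga) => w /= ax; exact: ab.
    move=> a b m Ga Gb hm; apply: (cl _ _ _ Ga Gb).
    have := @ev_inf _ _ _ _ x hm; congr is_inf; apply: funext => -[]//.
  have Gx : conv G x.
    apply: (conv_up (G := G) (F := principal x)) ; last exact: conv_point.
    - split; first by exists setT.
      split; first by move=> A B; rewrite /principal /= => h1 h2; apply: h2.
      by move=> A B; rewrite /principal /=.
    - exact: filter_setFilter.
    - move=> S; rewrite /principal /G /= => Sx.
      have -> : [set _ : unit | S x] = [set tt] by
        apply/seteqP; split => [] [].
      done.
  have := hlim G hG x Gx; done.
pose phid (x : X) : pt IC JC L := exist _ (psi x) (hpsi x).
have hb : forall l : L, phid @^-1` @bullet IC JC L l = phi l.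
  move=> l; apply/seteqP; split => x /=.
    rewrite /bullet /= => e.
    have : [set tt] tt by [].
    by rewrite -e.
  move=> plx; rewrite /bullet /= /psi; apply/seteqP; split => [] [] //.
exists phid; split; first split => //.
  move=> F x hF cFx; rewrite /conv_pt /bullet /= /psi.
  have -> : [set l | imfilter phid F (@bullet IC JC L l)] = phi @^-1` F.
    by apply/seteqP; split => l; rewrite /imfilter /= hb.
  apply/seteqP; split => [] [] // _.
  apply: (hlim F _ x cFx).
  case: hF => [ne [up cl]]; split => //; split => //.
  move=> a b m Fa Fb [lb gr].
  have -> : m = a `&` b.
    apply/seteqP; split.
      by move=> y my; split; [apply: (lb true) | apply: (lb false)].
    apply: gr => -[] y []//.
  exact: cl.
move=> g hg; apply: funext => x; apply: sig_eq2 => /=.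
apply: funext => l; rewrite /psi; apply: setunit_eq.
have := hg l; move/seteqP => [h1 h2]; split.
  by move=> e; apply: h1.
by move=> p; apply: h2.
Qed.
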